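(* Let $H$ be a Hopf algebra over a field, $A$ a unital associative algebra and $\cdot:H\otimes A\to A$ a partial action of $H$ on $A$. For each group-like element $h\in G(H)$ and each $a\in A$: (i) $(h\cdot1_A)a(h\cdot1_A)=(h\cdot1_A)a$; (ii) if the restriction of $\cdot$ to $\Bbbk G(H)\otimes A$ is a symmetric partial action, then $(h\cdot1_A)a=a(h\cdot1_A)$; (iii) if $h\cdot1_A=0$, then $(h^i\cdot1_A)(h^{i+1}\cdot1_A)=0$ for all $i\in\mathbb{Z}$.
   Context: $G(H)=\{g\ne0:\Delta(g)=g\otimes g\}$ is the group of group-like elements and $\Bbbk G(H)$ its span. A partial action of $H$ on $A$ is a linear map $\cdot:H\otimes A\to A$, $h\otimes a\mapsto h\cdot a$, with $1_H\cdot a=a$, $h\cdot(ab)=(h_1\cdot a)(h_2\cdot b)$, $h\cdot(k\cdot a)=(h_1\cdot1_A)(h_2k\cdot a)$ for all $h,k\in H$, $a,b\in A$ (Sweedler notation $\Delta(h)=h_1\otimes h_2$); it is symmetric if moreover $h\cdot(k\cdot a)=(h_1k\cdot a)(h_2\cdot1_A)$. *)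

(* Defs.v *)
From HB Require Import structures.
From mathcomp Require Import all_boot all_order all_algebra.
Set Implicit Arguments. Unset Strict Implicit. Unset Printing Implicit Defensive.
Import Order.TTheory GRing.Theory Num.Theory.
Local Open Scope ring_scope.

(* Tensors in H (x) H are represented by finite Sweedler sums, i.e. sequences
   of pairs [:: (x_1,y_1); ...] standing for  sum_i x_i (x) y_i.  Two representatives are equal as elements of
   H (x) H iff every bilinear form H x H -> K takes the same value on them
   (H, K vector spaces over a field). *)

Section Defs.
Variables (K : fieldType) (H : algType K).

Definition sw (V : zmodType) (s : seq (H * H)) (f : H -> H -> V) : V :=
  \sum_(p <- s) f p.1 p.2.

Definition lin_form (f : H -> K) : Prop :=
  forall c x y, f (c *: x + y) = c * f x + f y.

Definition lin_map (f : H -> H) : Prop :=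
  forall c x y, f (c *: x + y) = c *: f x + f y.

Definition bilin_form (f : H -> H -> K) : Prop :=
  (forall z, lin_form (f z)) /\ (forall z, lin_form (fun x => f x z)).

Definition trilin_form (f : H -> H -> H -> K) : Prop :=
  (forall y z, lin_form (fun x => f x y z)) /\
  (forall x z, lin_form (fun y => f x y z)) /\
  (forall x y, lin_form (fun z => f x y z)).

Record hopf_struct := HopfStruct {
  comul : H -> seq (H * H);
  counit : H -> K;
  antipode : H -> H;
  comul_lin : forall b, bilin_form b -> lin_form (fun x => sw (comul x) b);
  comul_coassoc : forall (t : H -> H -> H -> K), trilin_form t ->
    forall x, sw (comul x) (fun x1 x2 => sw (comul x1) (fun u v => t u v x2))
            = sw (comul x) (fun x1 x2 => sw (comul x2) (fun u v => t x1 u v));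
  counit_lin : lin_form counit;
  counit_l : forall x, sw (comul x) (fun x1 x2 => counit x1 *: x2) = x;
  counit_r : forall x, sw (comul x) (fun x1 x2 => counit x2 *: x1) = x;
  comul_mul : forall b, bilin_form b -> forall x y,
    sw (comul (x * y)) b =
    sw (comul x) (fun x1 x2 => sw (comul y) (fun y1 y2 => b (x1 * y1) (x2 * y2)));
  comul_one : forall b, bilin_form b -> sw (comul 1) b = b 1 1;
  counit_mul : forall x y, counit (x * y) = counit x * counit y;
  counit_one : counit 1 = 1;
  antipode_lin : lin_map antipode;
  antipode_l : forall x, sw (comul x) (fun x1 x2 => antipode x1 * x2) = counit x *: 1;
  antipode_r : forall x, sw (comul x) (fun x1 x2 => x1 * antipode x2) = counit x *: 1
}.

Variable HS : hopf_struct.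

Definition grouplike (g : H) : Prop :=
  g <> 0 /\ forall b, bilin_form b -> sw (comul HS g) b = b g g.

Definition in_span_grouplike (x : H) : Prop :=
  exists s : seq (K * H), (forall p, p \in s -> grouplike p.2) /\
    x = \sum_(p <- s) p.1 *: p.2.

(* integer powers of a group-like element; its inverse in G(H) is S(g) *)
Definition gpow (g : H) (i : int) : H :=
  match i with
  | Posz n => g ^+ n
  | Negz n => (antipode HS g) ^+ n.+1
  end.

Variable A : algType K.

(* a linear map H (x) A -> A is a bilinear map H -> A -> A *)
Definition bilin_act (act : H -> A -> A) : Prop :=
  (forall c h k a, act (c *: h + k) a = c *: act h a + act k a) /\
  (forall c h a b, act h (c *: a + b) = c *: act h a + act h b).

Definition partial_action_on (P : H -> Prop) (act : H -> A -> A) : Prop :=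
  bilin_act act /\
  (P 1 -> forall a, act 1 a = a) /\
  (forall h a b, P h ->
     act h (a * b) = sw (comul HS h) (fun h1 h2 => act h1 a * act h2 b)) /\
  (forall h k a, P h -> P k ->
     act h (act k a) = sw (comul HS h) (fun h1 h2 => act h1 1 * act (h2 * k) a)).

Definition sym_partial_action_on (P : H -> Prop) (act : H -> A -> A) : Prop :=
  partial_action_on P act /\
  (forall h k a, P h -> P k ->
     act h (act k a) = sw (comul HS h) (fun h1 h2 => act (h1 * k) a * act h2 1)).

Definition partial_action (act : H -> A -> A) : Prop :=
  partial_action_on (fun _ => True) act.

End Defs.

(* Main.v *)
Require Import Defs.
From HB Require Import structures.
From mathcomp Require Import all_boot all_order all_algebra.
From mathcomp Require Import boolp classical_sets.
Import GRing.Theory.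
Local Open Scope ring_scope.
Set Implicit Arguments. Unset Strict Implicit.

Fixpoint spanL {K : fieldType} {H : lmodType K} (L : seq H) (x : H) : Prop :=
  match L with [::] => x = 0 | l :: L' => exists c : K, spanL (H:=H) L' (x - c *: l) end.

Lemma spanL0 (K : fieldType) (H : lmodType K) (L : seq H) : spanL L 0.
Proof. elim: L => [|l L IH] //=; exists 0; by rewrite scale0r subr0. Qed.

Lemma spanL_closed (K : fieldType) (H : lmodType K) (L : seq H) c u v :
  spanL L u -> spanL L v -> spanL L (c *: u + v).
Proof.
elim: L u v => [|l L IH] u v /=; first by move=> -> ->; rewrite scaler0 addr0.
move=> [cu Hu] [cv Hv]; exists (c * cu + cv).
have -> : c *: u + v - (c * cu + cv) *: l = c *: (u - cu *: l) + (v - cv *: l).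
  rewrite scalerDl scalerBr scalerA opprD. 
  rewrite addrACA.  done.
exact: IH.
Qed.

Lemma spanL_mem (K : fieldType) (H : lmodType K) (L : seq H) l :
  l \in L -> spanL L l.
Proof.
elim: L => [|l0 L IH] //=; rewrite inE => /orP[/eqP ->|/IH h].
  by exists 1; rewrite scale1r subrr; apply: spanL0.
by exists 0; rewrite scale0r subr0.
Qed.

Definition closedS (K : fieldType) (H : lmodType K) (S : set H) :=
  forall c u v, S u -> S v -> S (c *: u + v).

Lemma ext (K : fieldType) (H : lmodType K) (L : seq H) (x : H) :
  ~ spanL L x -> exists phi : H -> K,
    (forall c u v, phi (c *: u + v) = c * phi u + phi v) /\ phi x = 1 /\
    forall l, l \in L -> phi l = 0.
Proof.
move=> nx.
pose good (S : set H) := [/\ S 0, closedS S, (forall l, l \in L -> S l) & ~ S x].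
pose P (S : set H) := S = set0 \/ good S.
have [A [PA Amax]] : exists A, P A /\ forall B, (A `<` B)%classic -> ~ P B.
  apply: Zorn_bigcup => F FP Ftot.
  have [[X FX gX]|nX] := pselect (exists2 X, F X & good X); last first.
    left; apply/seteqP; split => // u [Y FY Yu].
    case: (FP _ FY) => [E|gY]; first by rewrite E in Yu.
    by case: nX; exists Y.
  right; case: gX => X0 Xc XL Xx; split.
  - by exists X.
  - move=> c u v [Y1 FY1 Y1u] [Y2 FY2 Y2v].
    have gen : forall Y, F Y -> forall w, Y w -> good Y.
      move=> Y FY w Yw; case: (FP _ FY) => // E; by rewrite E in Yw.
    case: (Ftot _ _ FY1 FY2) => sub.
      exists Y2 => //; case: (gen _ FY2 _ Y2v) => _ c2 _ _; apply: c2 => //; exact: sub.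
    exists Y1 => //; case: (gen _ FY1 _ Y1u) => _ c2 _ _; apply: c2 => //; exact: sub.
  - by move=> l Ll; exists X => //; apply: XL.
  - move=> [Y FY Yx]; case: (FP _ FY) => E; first by rewrite E in Yx.
    by case: E => _ _ _; apply.
have gA : good A.
  case: PA => // E; exfalso; apply: (Amax (spanL L)).
    rewrite E; split => // /(_ 0 (spanL0 L)) //.
  right; split => //; [exact: spanL0 | move=> c u v; exact: spanL_closed | exact: spanL_mem].
case: gA => A0 Ac AL Ax.
have Aadd : forall u v, A u -> A v -> A (u + v).
  by move=> u v Au Av; have := Ac 1 _ _ Au Av; rewrite scale1r.
have Ascale : forall c u, A u -> A (c *: u).
  by move=> c u Au; have := Ac c _ _ Au A0; rewrite addr0.
have key : forall y, exists c, A (y - c *: x).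
  move=> y; have [Ay|nAy] := pselect (A y); first by exists 0; rewrite scale0r subr0.
  pose B := fun u => exists c s, A s /\ u = s + c *: y.
  have AB : (A `<=` B)%classic by move=> u Au; exists 0, u; rewrite scale0r addr0.
  have By : B y by exists 1, 0; rewrite scale1r add0r.
  have nPB : ~ P B by apply: Amax; split => // /(_ _ By).
  have Bx : B x.
    apply: contrapT => nBx; apply: nPB; right; split.
    - exact: AB.
    - move=> c u v [c1 [s1 [As1 ->]]] [c2 [s2 [As2 ->]]].
      exists (c * c1 + c2), (c *: s1 + s2); split; first exact: Ac.
      rewrite scalerDr scalerDl scalerA -!addrA; congr (_ + _).
      by rewrite addrC -!addrA; congr (_ + _); rewrite addrC.
    - by move=> l Ll; apply: AB; apply: AL.
    - exact: nBx.
  case: Bx => c [s [As xE]].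
  have c0 : c != 0.
    by apply/eqP => c0; apply: Ax; rewrite xE c0 scale0r addr0.
  exists c^-1; rewrite xE scalerDr scalerA mulVf // scale1r (addrC (c^-1 *: s)) opprD addrA subrr add0r.
  by rewrite -scaleNr; apply: Ascale.
have uniq : forall y c d, A (y - c *: x) -> A (y - d *: x) -> c = d.
  move=> y c d h1 h2; apply: contrapT => ncd; apply: Ax.
  have h3 := Ac (-1) _ _ h1 h2.
  have E : -1 *: (y - c *: x) + (y - d *: x) = (c - d) *: x.
    by rewrite scaleN1r opprB scalerBl addrA subrK.
  have cd0 : c - d != 0 by rewrite subr_eq0; apply/eqP.
  rewrite E in h3; have := Ascale (c - d)^-1 _ h3.
  by rewrite scalerA mulVf // scale1r.
pose phi y := projT1 (cid (key y)).
have phiP : forall y, A (y - phi y *: x) by move=> y; exact: (projT2 (cid (key y))).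
exists phi; split; last split.
- move=> c u v; symmetry; apply: (uniq (c *: u + v)); last exact: phiP.
  have := Ac c _ _ (phiP u) (phiP v).
  by rewrite scalerDl scalerBr scalerA opprD addrACA.
- symmetry; apply: (uniq x); last exact: phiP; by rewrite scale1r subrr.
- move=> l Ll; symmetry; apply: (uniq l); last exact: phiP.
  by rewrite scale0r subr0; apply: AL.
Qed.

Definition bil (K : fieldType) (H : algType K) (V : lmodType K) (f : H -> H -> V) :=
  (forall z c x y, f (c *: x + y) z = c *: f x z + f y z) /\
  (forall z c x y, f z (c *: x + y) = c *: f z x + f z y).

Lemma bil0l (K : fieldType) (H : algType K) (V : lmodType K) (f : H -> H -> V) :
  bil f -> forall z, f 0 z = 0.
Proof.
move=> [f1 _] z; have := f1 z 1 0 0; rewrite scaler0 addr0 scale1r.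
by move=> E; apply: (@addrI _ (f 0 z)); rewrite addr0 -E.
Qed.

Lemma bil0r (K : fieldType) (H : algType K) (V : lmodType K) (f : H -> H -> V) :
  bil f -> forall z, f z 0 = 0.
Proof.
move=> [_ f1] z; have := f1 z 1 0 0; rewrite scaler0 addr0 scale1r.
by move=> E; apply: (@addrI _ (f z 0)); rewrite addr0 -E.
Qed.

Lemma sw_cons (K : fieldType) (H : algType K) (V : zmodType) p s (f : H -> H -> V) :
  sw (p :: s) f = f p.1 p.2 + sw s f.
Proof. by rewrite /sw big_cons. Qed.

Lemma sw_nil (K : fieldType) (H : algType K) (V : zmodType) (f : H -> H -> V) :
  sw [::] f = 0.
Proof. by rewrite /sw big_nil. Qed.

Lemma sw_cat (K : fieldType) (H : algType K) (V : zmodType) s1 s2 (f : H -> H -> V) :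
  sw (s1 ++ s2) f = sw s1 f + sw s2 f.
Proof. by rewrite /sw big_cat. Qed.

Lemma replace (K : fieldType) (H : algType K) (r : seq (H * H)) x y :
  spanL (map fst r) x -> exists r' : seq (H * H), size r' = size r /\
    forall (V : lmodType K) (f : H -> H -> V), bil f -> f x y + sw r f = sw r' f.
Proof.
elim: r x => [|[a b] r IH] x /=.
  move=> ->; exists [::]; split => // V f bf; by rewrite sw_nil addr0 bil0l.
move=> [c /IH [r' [sr' E]]]; exists ((a, b + c *: y) :: r'); split; first by rewrite /= sr'.
move=> V f bf; rewrite !sw_cons /= -(E _ _ bf).
have -> : f x y = c *: f a y + f (x - c *: a) y.
  by case: bf => f1 _; rewrite -f1 addrC subrK.
case: bf => _ f2; by rewrite (addrC b) f2 addrACA.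
Qed.

Lemma lin0 (K : fieldType) (H : algType K) (phi : H -> K) : lin_form phi -> phi 0 = 0.
Proof.
move=> l; have := l 1 0 0; rewrite scaler0 addr0 mul1r => E.
by apply: (@addrI _ (phi 0)); rewrite addr0 -E.
Qed.

Lemma bilK (K : fieldType) (H : algType K) (phi psi : H -> K) :
  lin_form phi -> lin_form psi -> bil (V := K^o) (fun x y => (phi x * psi y : K^o)).
Proof.
move=> lp lq; split => z c x y /=.
  by rewrite lp mulrDl -mulrA.
by rewrite lq mulrDr mulrCA.
Qed.

Lemma sep (K : fieldType) (H : algType K) n (s : seq (H * H)) : (size s <= n)%N ->
  (forall phi psi : H -> K, lin_form phi -> lin_form psi ->
     sw s (fun x y => phi x * psi y) = 0) ->
  forall (V : lmodType K) (f : H -> H -> V), bil f -> sw s f = 0.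
Proof.
elim: n s => [|n IH] [|[x1 y1] r] //=; try by move=> *; rewrite sw_nil.
rewrite ltnS => sr hyp V f bf.
have [sp|nsp] := pselect (spanL (map fst r) x1).
  have [r' [sr' E]] := replace y1 sp.
  rewrite sw_cons /= E //; apply: IH; first by rewrite sr'.
  move=> phi psi lp lq.
  have := E K^o _ (bilK lp lq) => /= <-.
  by rewrite -(hyp _ _ lp lq) sw_cons.
  done.
have [phi0 [lp0 [p1 p0]]] := ext nsp.
have vanish : forall psi : H -> K, sw r (fun x y => phi0 x * psi y) = 0.
  move=> psi; rewrite /sw big1_seq // => p /andP[_ pr].
  by rewrite p0 ?mul0r // map_f.
have y0 : y1 = 0.
  apply: contrapT => ny; have [psi0 [lq0 [q1 _]]] := ext (L := [::]) ny.
  have := hyp _ _ lp0 lq0; rewrite sw_cons /= vanish p1 q1 addr0 mul1r => /eqP.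
  by rewrite oner_eq0.
rewrite sw_cons /= y0 bil0r // add0r; apply: (IH r) => // phi psi lp lq.
by rewrite -(hyp _ _ lp lq) sw_cons /= y0 lin0 // mulr0 add0r.
Qed.

Lemma bilNl (K : fieldType) (H : algType K) (V : lmodType K) (f : H -> H -> V) :
  bil f -> forall x z, f (- x) z = - f x z.
Proof.
move=> bf x z; have := (proj1 bf) z (-1) x 0.
by rewrite addr0 scaleN1r bil0l // addr0 scaleN1r.
Qed.

Lemma linN (K : fieldType) (H : algType K) (phi : H -> K) : lin_form phi ->
  forall x, phi (- x) = - phi x.
Proof.
move=> lp x; have := lp (-1) x 0.
by rewrite addr0 scaleN1r lin0 // addr0 mulN1r.
Qed.

Lemma bilin_prod (K : fieldType) (H : algType K) (phi psi : H -> K) :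
  lin_form phi -> lin_form psi -> bilin_form (fun x y => phi x * psi y).
Proof.
move=> lp lq; split => z c x y /=.
  by rewrite lq mulrDr mulrCA.
by rewrite lp mulrDl mulrA.
Qed.

Definition gl (K : fieldType) (H : algType K) (HS : hopf_struct H) (g : H) :=
  forall b, bilin_form b -> sw (comul HS g) b = b g g.

Lemma transfer (K : fieldType) (H : algType K) (HS : hopf_struct H) g :
  gl HS g -> forall (V : lmodType K) (f : H -> H -> V), bil f ->
  sw (comul HS g) f = f g g.
Proof.
move=> gg V f bf; apply/eqP; rewrite -subr_eq0.
have E : sw (comul HS g ++ [:: (-g, g)]) f = 0.
  apply: (@sep K H (size (comul HS g ++ [:: (-g, g)]))) => // phi psi lp lq.
  rewrite sw_cat sw_cons sw_nil addr0 /= gg ?linN ?mulNr ?subrr //.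
  exact: bilin_prod.
by move: E; rewrite sw_cat sw_cons sw_nil addr0 /= bilNl // => ->.
Qed.

Lemma lin_id (K : fieldType) (H : algType K) : lin_map (H := H) id.
Proof. by []. Qed.

Lemma lin_mulr (K : fieldType) (H : algType K) (k : H) : lin_map (fun x => x * k).
Proof. by move=> c x y; rewrite mulrDl scalerAl. Qed.

Lemma lin_mull (K : fieldType) (H : algType K) (k : H) : lin_map (fun x => k * x).
Proof. by move=> c x y; rewrite mulrDr scalerAr. Qed.

Lemma bilin_lin (K : fieldType) (H : algType K) (b : H -> H -> K) L1 L2 :
  bilin_form b -> lin_map L1 -> lin_map L2 -> bilin_form (fun x y => b (L1 x) (L2 y)).
Proof.
move=> [b1 b2] l1 l2; split => z c x y /=.
  by rewrite l2 b1.
by rewrite l1 b2.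
Qed.

Lemma bil_act (K : fieldType) (H : algType K) (A : algType K) (act : H -> A -> A)
  L1 L2 a b : bilin_act act -> lin_map L1 -> lin_map L2 ->
  bil (fun h1 h2 => act (L1 h1) a * act (L2 h2) b).
Proof.
move=> [ba _] l1 l2; split => z c x y /=.
  by rewrite l1 ba mulrDl scalerAl.
by rewrite l2 ba mulrDr scalerAr.
Qed.

Lemma sw_exchange (K : fieldType) (H : algType K) (V : zmodType) (s1 s2 : seq (H * H))
  (F : H -> H -> H -> H -> V) :
  sw s1 (fun a b => sw s2 (F a b)) = sw s2 (fun c d => sw s1 (fun a b => F a b c d)).
Proof. by rewrite /sw; exact: exchange_big. Qed.

Lemma sw_ext (K : fieldType) (H : algType K) (V : zmodType) (s : seq (H * H))
  (F G : H -> H -> V) : (forall x y, F x y = G x y) -> sw s F = sw s G.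
Proof. by move=> E; rewrite /sw; apply: eq_bigr => p _; apply: E. Qed.

Lemma gl1 (K : fieldType) (H : algType K) (HS : hopf_struct H) : gl HS 1.
Proof. by move=> b bb; rewrite comul_one. Qed.

Lemma glM (K : fieldType) (H : algType K) (HS : hopf_struct H) x y :
  gl HS x -> gl HS y -> gl HS (x * y).
Proof.
move=> gx gy b bb; rewrite comul_mul //.
rewrite (sw_ext _ (G := fun x1 x2 => b (x1 * y) (x2 * y))); last first.
  move=> x1 x2; rewrite gy //.
  exact: (bilin_lin bb (lin_mull x1) (lin_mull x2)).
by rewrite gx //; exact: (bilin_lin bb (lin_mulr y) (lin_mulr y)).
Qed.

Lemma glX (K : fieldType) (H : algType K) (HS : hopf_struct H) x n :
  gl HS x -> gl HS (x ^+ n).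
Proof.
move=> gx; elim: n => [|n IH]; first by rewrite expr0; exact: gl1.
by rewrite exprSr; apply: glM.
Qed.

Theorem lemma3p1 (K : fieldType) (H : algType K) (HS : hopf_struct H)
  (A : algType K) (act : H -> A -> A) (Hact : partial_action HS act)
  (h : H) (hg : grouplike HS h) (a : A) :
  [/\ act h 1 * a * act h 1 = act h 1 * a,
      (sym_partial_action_on HS (in_span_grouplike HS) act ->
         act h 1 * a = a * act h 1)
    & (act h 1 = 0 ->
         forall i : int, act (gpow HS h i) 1 * act (gpow HS h (i + 1)) 1 = 0)].
Proof.
case: hg => hn0 gh.
case: Hact => ba [act1 [actM actC]].
have Slin := antipode_lin HS.
have e1 : counit HS h = 1.
  have := counit_l HS h; rewrite (transfer gh) => [E|]; last first.
    split => z c x y /=; first by rewrite (counit_lin HS) scalerDl scalerA.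
    by rewrite scalerDr scalerA mulrC -scalerA.
  apply: contrapT => ne; apply: hn0.
  have : (counit HS h - 1) *: h = 0 by rewrite scalerBl E scale1r subrr.
  move/(congr1 (fun v => (counit HS h - 1)^-1 *: v)).
  by rewrite scalerA mulVf ?scale1r ?scaler0 // subr_eq0; apply/eqP.
have e2 : h * antipode HS h = 1.
  have := antipode_r HS h; rewrite e1 scale1r (transfer gh) // .
  split => z c x y /=; first by rewrite mulrDl scalerAl.
  by rewrite Slin mulrDr scalerAr.
have e3 : antipode HS h * h = 1.
  have := antipode_l HS h; rewrite e1 scale1r (transfer gh) // .
  split => z c x y /=; first by rewrite Slin mulrDl scalerAl.
  by rewrite mulrDr scalerAr.
set Sh := antipode HS h in e2 e3 *.
have gS : gl HS Sh.
  move=> b bb.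
  pose b' u v := b (Sh * u) (Sh * v).
  have bb' : bilin_form b' by exact: (bilin_lin bb (lin_mull Sh) (lin_mull Sh)).
  have -> : b Sh Sh = b' 1 1 by rewrite /b' mulr1.
  rewrite -(comul_one HS bb') -e2 comul_mul // sw_exchange.
  apply: sw_ext => y1 y2; rewrite gh /b' ?mulrA ?e3 ?mul1r //.
  exact: (bilin_lin bb' (lin_mulr y1) (lin_mulr y2)).
have AM : forall g x y, gl HS g -> act g (x * y) = act g x * act g y.
  move=> g x y gg; rewrite actM // (transfer gg) //.
  exact: (bil_act _ _ ba (@lin_id _ H) (@lin_id _ H)).
have AC : forall g k x, gl HS g -> act g (act k x) = act g 1 * act (g * k) x.
  move=> g k x gg; rewrite actC // (transfer gg) //.
  exact: (bil_act _ _ ba (@lin_id _ H) (lin_mulr k)).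
have key : act h (act Sh a) = act h 1 * a by rewrite AC // e2 act1.
split.
- rewrite -key -AM // mulr1 //.
- case=> _ sym; rewrite -key sym.
  + rewrite (transfer gh); first by rewrite e2 act1.
    exact: (bil_act _ _ ba (lin_mulr Sh) (@lin_id _ H)).
  + by exists [:: (1, h)]; split; [move=> p; rewrite inE => /eqP -> | rewrite big_seq1 scale1r].
  + exists [:: (1, Sh)]; split; last by rewrite big_seq1 scale1r.
    move=> p; rewrite inE => /eqP -> /=; split; last exact: gS.
    by move=> S0; move: e2; rewrite S0 mulr0 => /eqP; rewrite eq_sym oner_eq0.
- move=> h0 i.
  have [gi ->] : gl HS (gpow HS h i) /\ gpow HS h (i + 1) = gpow HS h i * h.
    case: i => n /=.
      split; first exact: glX.
      by rewrite addn1 exprSr.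
    split; first exact: glX.
    case: n => [|n] /=; first by rewrite expr1 e3 expr0.
    by rewrite subn1 /= -/Sh [Sh ^+ n.+2]exprSr -mulrA e3 mulr1.
  rewrite -AC // h0.
  by have := (proj2 ba) 1 (gpow HS h i) 0 0; rewrite scaler0 addr0 scale1r => E; apply: (@addrI _ (act (gpow HS h i) 0)); rewrite addr0 -E.
Qed.
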